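(* Let $R$ be a ring with unity and involution $*$, let $a\in R$ and let $m$ be a nonnegative integer. Then $a$ is left dual pseudo core invertible if and only if $a^k$ is left dual $a^m$-core invertible for some positive integer $k$. In this case, if $x$ is a left dual $a^m$-core inverse of $a^k$, then $xa^{k+m-1}$ is a left dual pseudo core inverse of $a$; and if $y\in R$ satisfies $a^kya=a^k$, $(ya)^*=ya$ and $y^2a=y$, then $y^{k+m}$ is a left dual $a^m$-core inverse of $a^k$.
   Context: Here $a^0=1$. An element $a$ is left dual pseudo core invertible if there exist $y\in R$ and a positive integer $k$ such that $a^kya=a^k$, $(ya)^*=ya$ and $y^2a=y$; such $y$ is a left dual pseudo core inverse of $a$. For $u,v\in R$, $u$ is left dual $v$-core invertible if there exists $x\in R$ with $uxvu=u$, $(xvu)^*=xvu$ and $x^2vu=x$; such $x$ is a left dual $v$-core inverse of $u$. *)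

(* Defs.v *)
From mathcomp Require Import all_boot all_algebra.
Set Implicit Arguments. Unset Strict Implicit. Unset Printing Implicit Defensive.
Import GRing.Theory.
Local Open Scope ring_scope.

Definition involution (R : pzRingType) (star : R -> R) : Prop :=
  [/\ (forall x y : R, star (x + y) = star x + star y),
      (forall x y : R, star (x * y) = star y * star x)
    & (forall x : R, star (star x) = x)].

Definition is_ldpc_inverse_k (R : pzRingType) (star : R -> R) (a y : R) (k : nat) : Prop :=
  [/\ a ^+ k * y * a = a ^+ k, star (y * a) = y * a & y ^+ 2 * a = y].

Definition is_ldpc_inverse (R : pzRingType) (star : R -> R) (a y : R) : Prop :=
  exists2 k : nat, (0 < k)%N & is_ldpc_inverse_k star a y k.

Definition ldpc_invertible (R : pzRingType) (star : R -> R) (a : R) : Prop :=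
  exists y : R, is_ldpc_inverse star a y.

Definition is_ldvc_inverse (R : pzRingType) (star : R -> R) (u v x : R) : Prop :=
  [/\ u * x * v * u = u, star (x * v * u) = x * v * u & x ^+ 2 * v * u = x].

Definition ldvc_invertible (R : pzRingType) (star : R -> R) (u v : R) : Prop :=
  exists x : R, is_ldvc_inverse star u v x.

(* Main.v *)
Require Import Defs.
From mathcomp Require Import all_boot all_algebra.
Import GRing.Theory.
Local Open Scope ring_scope.

Lemma powA (R : pzRingType) (y a : R) : y ^+ 2 * a = y ->
  forall n, (0 < n)%N -> y ^+ n.+1 * a = y ^+ n.
Proof.
move=> H [|n] // _.
by rewrite -addn2 exprD -mulrA H -exprSr.
Qed.

Lemma powB (R : pzRingType) (y a : R) : y ^+ 2 * a = y ->
  forall n, (0 < n)%N -> y ^+ n * a ^+ n = y * a.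
Proof.
move=> H; elim=> [|n IH] // _.
case: n IH => [|n] IH; first by rewrite !expr1.
by rewrite [a ^+ _]exprS mulrA powA // IH.
Qed.

Theorem proposition3p4 (R : pzRingType) (star : R -> R) (a : R) (m : nat) :
  involution star ->
  (ldpc_invertible star a <->
     exists2 k : nat, (0 < k)%N & ldvc_invertible star (a ^+ k) (a ^+ m))
  /\ (forall (k : nat) (x : R), (0 < k)%N ->
        is_ldvc_inverse star (a ^+ k) (a ^+ m) x ->
        is_ldpc_inverse star a (x * a ^+ (k + m - 1)))
  /\ (forall (k : nat) (y : R), (0 < k)%N ->
        is_ldpc_inverse_k star a y k ->
        is_ldvc_inverse star (a ^+ k) (a ^+ m) (y ^+ (k + m))).
Proof.
move=> _.
have P2 : forall (k : nat) (x : R), (0 < k)%N ->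
        is_ldvc_inverse star (a ^+ k) (a ^+ m) x ->
        is_ldpc_inverse star a (x * a ^+ (k + m - 1)).
  move=> k x kp [H1 H2 H3].
  have E : a ^+ (k + m - 1) * a = a ^+ m * a ^+ k.
    by rewrite -exprSr -exprD subn1 prednK ?addn_gt0 ?kp // addnC.
  have E' : x * a ^+ (k + m - 1) * a = x * a ^+ m * a ^+ k.
    by rewrite -mulrA E mulrA.
  exists k => //; split.
  - by rewrite -mulrA E' !mulrA.
  - by rewrite E'.
  - set b := a ^+ (k + m - 1) in E' *.
    have C : a ^+ m * a ^+ k * b = b * a ^+ m * a ^+ k.
      by rewrite /b -!exprD [(m + k + _)%N]addnC addnA.
    rewrite expr2 -[_ * a]mulrA E'.
    rewrite -{1}H3.
    transitivity (x ^+ 2 * (a ^+ m * a ^+ k * b) * (x * a ^+ m * a ^+ k)).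
      by rewrite !mulrA.
    rewrite C.
    transitivity (x ^+ 2 * b * a ^+ m * (a ^+ k * x * a ^+ m * a ^+ k)).
      by rewrite !mulrA.
    rewrite H1; transitivity (x ^+ 2 * (b * a ^+ m * a ^+ k)); first by rewrite !mulrA.
    by rewrite -C !mulrA H3.
have P3 : forall (k : nat) (y : R), (0 < k)%N ->
        is_ldpc_inverse_k star a y k ->
        is_ldvc_inverse star (a ^+ k) (a ^+ m) (y ^+ (k + m)).
  move=> k y kp [H1 H2 H3].
  have km : (0 < k + m)%N by rewrite addn_gt0 kp.
  have E : y ^+ (k + m) * a ^+ m * a ^+ k = y * a.
    by rewrite -mulrA -exprD addnC powB // addnC.
  split.
  - transitivity (a ^+ k * (y ^+ (k + m) * a ^+ m * a ^+ k)); first by rewrite !mulrA.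
    by rewrite E mulrA H1.
  - by rewrite E.
  - transitivity (y ^+ (k + m) * (y ^+ (k + m) * a ^+ m * a ^+ k)); first by rewrite expr2 !mulrA.
    by rewrite E mulrA -exprSr powA.
split; last by split.
split.
- move=> [y [k kp Hy]].
  by exists k => //; exists (y ^+ (k + m)); apply: P3.
- move=> [k kp [x Hx]].
  by exists (x * a ^+ (k + m - 1)); apply: (P2 k).
Qed.
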